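(* Assume (H$\mathscr K$), (H$\mathscr L$), (H$\mathscr M$), (H$\mathscr F$), (H$\mathscr G$), (H$\mathscr E$), (H$\gamma$), (H$\Psi$), $c_{\mathscr F}>c_{\mathscr G}\|\gamma\|^p$, and that $\mathscr F$ is strictly monotone, so that Problem 2 has a unique solution $\mathscr S(z,\xi)$ for each $(z,\xi)\in\mathscr K\times Y^*$. Then the map $\mathscr S\colon\mathscr K\times Y^*\to\mathcal W\cap\mathscr K$ is bounded: it maps bounded subsets of $\mathscr K\times Y^*$ (with norm $\|z\|_X+\|\xi\|_{Y^*}$) into bounded subsets of $\mathcal W$.
   Context: Setting. $X$ and $Y$ are real reflexive separable Banach spaces with duals $X^*,Y^*$; $\langle\cdot,\cdot\rangle_X$ and $\langle\cdot,\cdot\rangle_Y$ denote the duality pairings. Fix $1<p<\infty$. $\rightharpoonup$ denotes weak convergence. (H$\mathscr L$) $\mathscr L\colon D(\mathscr L)\subset X\to X^*$ is linear, densely defined and maximal monotone. Put $\mathcal W:=\{x\in D(\mathscr L): \mathscr Lx\in X^*\}$ with the graph norm $\|x\|_{\mathcal W}=\|x\|_X+\|\mathscr Lx\|_{X^*}$; ''$x_n\rightharpoonup x$ in $\mathcal W$'' means $x_n\rightharpoonup x$ in $X$ and $\mathscr Lx_n\rightharpoonup \mathscr Lx$ in $X^*$. (H$\mathscr K$) $\mathscr K\subset X$ is nonempty, closed and convex. (H$\mathscr M$) $\mathscr M\colon\mathscr K\to 2^{\mathscr K}$ has nonempty, closed, convex values, $0\in\operatorname{int}\big(\bigcap_{w\in\mathscr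 K}\mathscr M(w)\big)$, and: whenever $\{y_n\},\{x_n\}\subset\mathscr K$ satisfy $x_n\in\mathscr M(y_n)\cap D(\mathscr L)$, $y_n\rightharpoonup y$ in $\mathcal W$ and $x_n\rightharpoonup x$ in $\mathcal W$, then $x\in\mathscr M(y)\cap D(\mathscr L)$. (H$\mathscr F$) $\mathscr F\colon X\to X^*$ is bounded (maps bounded sets to bounded sets), monotone and hemicontinuous, and there are constants $c_{\mathscr F}>0$, $d_{\mathscr F}\ge 0$ with $\langle\mathscr F(x),x\rangle_X\ge c_{\mathscr F}\|x\|_X^p-d_{\mathscr F}$ for all $x\in X$. (H$\mathscr G$) $\mathscr G\colon Y\to 2^{Y^*}$ has nonempty, closed, convex values, its graph is sequentially closed with respect to strong convergence in $Y$ and weak convergence in $Y^*$, and there are constants $c_{\mathscr G},d_{\mathscr G}\ge0$ with $\|\xi\|_{Y^*}\le c_{\mathscr G}\|z\|_Y^{p-1}+d_{\mathscr G}$ for all $\xi\in\mathscr G(z)$, $z\in Y$. (H$\mathscr E$) $\mathscr E\in X^*$. (H$\gamma$) $\gamma\colon X\to Y$ is linear and continuous, with operator norm $\|\gamma\|$, and its restriction to $\mathcal W$ is compact from $\mathcal W$ into $Y$. (H$\Psi$) $\Psi\colon X\times X\to\mathbb R$ satisfies: (i) for each $x\in X$, $\Psi(x,\cdot)$ is convex and lower semicontinuous; (ii) there are $0<\eta<p$ and a bounded function $b_\Psi\colon X^3\to[0,\infty)$ such that $\Psi(x,y_1)-\Psi(x,y_2)\le b_\Psi(x,y_1,y_2)\|y_1-y_2\|_X^\eta$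 for all $x,y_1,y_2\in X$, and for each bounded $B\subset X$, $b_\Psi(z,0,x)/\|x\|_X^{p-\eta}\to0$ as $\|x\|_X\to\infty$ uniformly in $z\in B$; (iii) $\limsup_{n}(\Psi(w_n,y_n)-\Psi(w_n,x_n))\le\Psi(w,y)-\Psi(w,x)$ whenever $\{w_n\},\{y_n\},\{x_n\}\subset\mathscr K\cap D(\mathscr L)$ with $w_n\rightharpoonup w$, $x_n\rightharpoonup x$ in $\mathcal W$ and $y_n\to y$ in $X$; (iv) for every $v\in X$, $0$ belongs to the domain of the convex subdifferential $\partial\Psi(v,\cdot)$, $|\Psi(v,0)|\le e_\Psi$ for a constant $e_\Psi$, and there are constants $c_\Psi,d_\Psi\ge0$ and $1\le\beta<p$ with $\Psi(v,y)\ge -c_\Psi\|y\|_X^\beta-d_\Psi$ for all $v,y\in X$. Problem 2 (for given $(z,\xi)\in\mathscr K\times Y^*$): find $x\in\mathscr M(z)\cap D(\mathscr L)$ such that $\langle\mathscr Lx+\mathscr F(x)-\mathscr E,y-x\rangle_X+\langle\xi,\gamma(y-x)\rangle_Y\ge\Psi(z,x)-\Psi(z,y)$ for all $y\in\mathscr M(z)\cap D(\mathscr L)$. *)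

(* Defs.v *)
From HB Require Import structures.
From mathcomp Require Import all_boot all_order all_algebra.
From mathcomp Require Import all_classical all_reals all_analysis.
Set Implicit Arguments. Unset Strict Implicit. Unset Printing Implicit Defensive.
Import Order.TTheory GRing.Theory Num.Theory.
Import numFieldNormedType.Exports.
Local Open Scope classical_set_scope.
Local Open Scope ring_scope.

Section Dual.
Variables (R : realType) (X : normedModType R).

Definition lin_functional (f : X -> R) : Prop :=
  forall (a : R) (x y : X), f (a *: x + y) = a * f x + f y.

(* the (topological) dual X^* : bounded linear functionals; pairing = application *)
Definition dual : set (X -> R) :=
  [set f | lin_functional f /\ exists C : R, forall x : X, `|f x| <= C * `|x|].

Definition dnorm (f : X -> R) : R := sup [set `|f x| | x in [set x : X | `|x| <= 1]].

Definition bidual : set ((X -> R) -> R) :=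
  [set Phi | (forall (a : R) (f g : X -> R), dual f -> dual g ->
                Phi (fun x => a * f x + g x) = a * Phi f + Phi g)
          /\ exists C : R, forall f, dual f -> `|Phi f| <= C * dnorm f].

Definition reflexive_space : Prop :=
  forall Phi, bidual Phi -> exists x : X, forall f, dual f -> Phi f = f x.

Definition separable_space : Prop :=
  exists S : set X, countable S /\ closure S = setT.

Definition weak_cvg (u : nat -> X) (x : X) : Prop :=
  forall f, dual f -> (fun n => f (u n)) @ \oo --> f x.

Definition dweak_cvg (u : nat -> X -> R) (f : X -> R) : Prop :=
  (forall n, dual (u n)) /\ dual f /\
  forall Phi, bidual Phi -> (fun n => Phi (u n)) @ \oo --> Phi f.

Definition cvx (A : set X) : Prop :=
  forall x y (t : R), A x -> A y -> 0 <= t -> t <= 1 -> A (t *: x + (1 - t) *: y).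

Definition dcvx (A : set (X -> R)) : Prop :=
  forall f g (t : R), A f -> A g -> 0 <= t -> t <= 1 ->
    A (fun x => t * f x + (1 - t) * g x).

Definition dclosed (A : set (X -> R)) : Prop :=
  forall (u : nat -> X -> R) f, (forall n, A (u n)) -> dual f ->
    (fun n => dnorm (fun x => u n x - f x)) @ \oo --> (0 : R) -> A f.

Definition lsc (g : X -> R) : Prop :=
  forall y (a : R), a < g y -> \forall z \near y, a < g z.

End Dual.

Section Ops.
Variables (R : realType) (X Y : normedModType R).

Definition opnorm (g : X -> Y) : R := sup [set `|g x| | x in [set x : X | `|x| <= 1]].

Definition Wweak_cvg (D : set X) (L : X -> X -> R) (u : nat -> X) (x : X) : Prop :=
  (forall n, D (u n)) /\ D x /\ weak_cvg u x /\ dweak_cvg (fun n => L (u n)) (L x).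

Definition Wnorm (L : X -> X -> R) (x : X) : R := `|x| + dnorm (L x).

End Ops.

Section Problem2.
Variables (R : realType) (X Y : normedModType R).
Local Open Scope ring_scope.

Definition problem2 (D : set X) (L : X -> X -> R) (F : X -> X -> R) (E : X -> R)
  (gamma : X -> Y) (M : X -> set X) (Psi : X -> X -> R)
  (z : X) (xi : Y -> R) (x : X) : Prop :=
  M z x /\ D x /\
  forall y, M z y -> D y ->
    L x (y - x) + F x (y - x) - E (y - x) + xi (gamma (y - x)) >= Psi z x - Psi z y.
End Problem2.

(* Main.v *)
Require Import Defs.
From HB Require Import structures.
From mathcomp Require Import all_boot all_order all_algebra.
From mathcomp Require Import all_classical all_reals all_analysis.
From mathcomp Require Import lra.
Import Order.TTheory GRing.Theory Num.Theory.
Import numFieldNormedType.Exports.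
Local Open Scope classical_set_scope.
Local Open Scope ring_scope.

Lemma growth_bound (R : realType) (p beta cF A B C t : R) :
  1 <= beta -> beta < p -> 0 < cF -> 0 <= A -> 0 <= B -> 0 <= C -> 0 <= t ->
  cF * t `^ p <= A * t + B * t `^ beta + C ->
  t <= Num.max 1 (((A + B + C) / cF) `^ ((p - beta)^-1)).
Proof.
move=> b1 bp cF0 A0 B0 C0 t0 H.
rewrite leNgt; apply/negP => Ht.
set S := A + B + C.
set T := Num.max 1 _ in Ht.
have T1 : 1 <= T by rewrite /T le_max lexx.
have t1 : 1 < t by apply: le_lt_trans Ht.
have tb : t <= t `^ beta by apply: le1r_powR => //; exact: ltW.
have tb1 : 1 <= t `^ beta.
  by rewrite -(powRr0 t); apply: ler_powR; [exact: ltW|lra].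
have pb0 : 0 < p - beta by lra.
have Hp : t `^ p = t `^ beta * t `^ (p - beta).
  by rewrite -powRD ?subrKC //; apply/implyP => _; rewrite gt_eqF // (lt_trans _ t1).
have S0 : 0 <= S by rewrite /S; lra.
have HT : S / cF <= T `^ (p - beta).
  have -> : S / cF = ((S / cF) `^ ((p - beta)^-1)) `^ (p - beta).
    by rewrite -powRrM mulVf ?gt_eqF // powRr1 // divr_ge0 // ltW.
  apply: ge0_ler_powR; [exact: ltW| |rewrite nnegrE; lra|].
    by rewrite nnegrE powR_ge0.
  by rewrite /T le_max lexx orbT.
have Ht2 : T `^ (p - beta) < t `^ (p - beta).
  apply: gt0_ltr_powR => //; rewrite ?nnegrE //.
  lra.
have : S * t `^ beta < cF * t `^ p.
  have hu : S / cF < t `^ (p - beta) by apply: le_lt_trans Ht2.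
  rewrite ltr_pdivrMr // in hu.
  have a0 : 0 < t `^ beta by lra.
  rewrite Hp; nra.
have : A * t + B * t `^ beta + C <= S * t `^ beta.
  rewrite /S !mulrDl; apply: lerD; [apply: lerD|].
    by apply: ler_wpM2l.
  by [].
  by rewrite -{1}(mulr1 C) ler_wpM2l.
lra.
Qed.

Set Implicit Arguments. Unset Strict Implicit.
Section DualLemmas.
Variables (R : realType) (X : normedModType R).
Implicit Types (f : X -> R) (x y v : X).

Lemma dual0 f : dual f -> f 0 = 0.
Proof.
move=> [lf _]; have := lf 1 0 0; rewrite scale1r addr0 mul1r.
move=> h; have : f 0 + f 0 - f 0 = f 0 - f 0 by rewrite -h.
by rewrite addrK subrr.
Qed.

Lemma dualZ f a x : dual f -> f (a *: x) = a * f x.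
Proof. move=> df; have := df.1 a x 0; rewrite addr0 dual0 // addr0; by []. Qed.

Lemma dualD f x y : dual f -> f (x + y) = f x + f y.
Proof. move=> df; have := df.1 1 x y; rewrite scale1r mul1r; by []. Qed.

Lemma dualN f x : dual f -> f (- x) = - f x.
Proof. by move=> df; rewrite -scaleN1r dualZ // mulN1r. Qed.

Lemma dualB f x y : dual f -> f (x - y) = f x - f y.
Proof. by move=> df; rewrite dualD // dualN. Qed.

Lemma dual_has_sup f : dual f -> has_sup [set `|f x| | x in [set x : X | `|x| <= 1]].
Proof.
move=> [lf [C HC]]; split.
  by exists `|f 0|, 0 => //=; rewrite normr0.
exists `|C| => _ [x /= x1 <-]; apply: le_trans (HC x) _.
apply: le_trans (_ : `|C| * `|x| <= `|C|).
  by apply: ler_wpM2r => //; exact: ler_norm.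
by rewrite -[X in _ <= X]mulr1 ler_wpM2l.
Qed.

Lemma dnorm_ge0 f : dual f -> 0 <= dnorm f.
Proof.
move=> df; apply: le_trans (_ : `|f 0| <= _); first by [].
by apply: (sup_upper_bound (dual_has_sup df)); exists 0 => //=; rewrite normr0.
Qed.

Lemma dnorm_ub f v : dual f -> `|f v| <= dnorm f * `|v|.
Proof.
move=> df; have [->|v0] := eqVneq v 0; first by rewrite dual0 // !normr0 mulr0.
have nv : 0 < `|v| by rewrite normr_gt0.
set u := `|v|^-1 *: v.
have hu : `|u| <= 1 by rewrite /u normrZ normfV normr_id mulVf ?gt_eqF.
have : `|f u| <= dnorm f.
  by rewrite /dnorm; apply: (sup_upper_bound (dual_has_sup df)); exists u.
rewrite /u dualZ // normrM normfV normr_id.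
by rewrite ler_pdivrMl // mulrC.
Qed.

Lemma dnorm_le f B : (forall v, `|v| <= 1 -> `|f v| <= B) -> dnorm f <= B.
Proof.
move=> H; apply: ge_sup.
  by exists `|f 0|, 0 => //=; rewrite normr0.
by move=> _ [x /= x1 <-]; apply: H.
Qed.

End DualLemmas.

Unset Implicit Arguments.
Theorem mainTheorem3
  (R : realType) (X Y : completeNormedModType R) (p : R)
  (D : set X) (L : X -> X -> R) (K : set X) (M : X -> set X)
  (F : X -> X -> R) (cF dF : R)
  (G : Y -> set (Y -> R)) (cG dG : R)
  (E : X -> R) (gamma : X -> Y)
  (Psi : X -> X -> R) (eta : R) (bPsi : X -> X -> X -> R)
  (ePsi cPsi dPsi beta : R) :
  (* the spaces *)
  reflexive_space X -> separable_space X ->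
  reflexive_space Y -> separable_space Y ->
  1 < p ->
  (* (H L) : linear, densely defined, maximal monotone, D(L) -> X^* *)
  D 0 ->
  (forall (a : R) x y, D x -> D y -> D (a *: x + y)) ->
  (forall (a : R) x y, D x -> D y ->
     L (a *: x + y) = (fun v => a * L x v + L y v)) ->
  (forall x, D x -> dual (L x)) ->
  closure D = setT ->
  (forall x y, D x -> D y -> 0 <= L x (x - y) - L y (x - y)) ->
  (forall x f, dual f -> (forall y, D y -> 0 <= f (x - y) - L y (x - y)) ->
     D x /\ L x = f) ->
  (* (H K) *)
  K !=set0 -> closed K -> cvx K ->
  (* (H M) *)
  (forall w, K w -> M w `<=` K /\ M w !=set0 /\ closed (M w) /\ cvx (M w)) ->
  interior [set v | forall w, K w -> M w v] 0 ->
  (forall (yn xn : nat -> X) y x,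
     (forall n, K (yn n)) -> (forall n, K (xn n)) ->
     (forall n, M (yn n) (xn n) /\ D (xn n)) ->
     Wweak_cvg D L yn y -> Wweak_cvg D L xn x ->
     M y x /\ D x) ->
  (* (H F) *)
  (forall x, dual (F x)) ->
  (forall r : R, exists C : R, forall x, `|x| <= r -> dnorm (F x) <= C) ->
  (forall x y, 0 <= F x (x - y) - F y (x - y)) ->
  (forall x y z, {within `[0, 1], continuous (fun t : R => F (x + t *: y) z)}) ->
  0 < cF -> 0 <= dF ->
  (forall x, F x x >= cF * `|x| `^ p - dF) ->
  (* (H G) *)
  (forall z, G z `<=` @dual R Y /\ G z !=set0 /\ dclosed (G z) /\ dcvx (G z)) ->
  (forall (zn : nat -> Y) z (xin : nat -> Y -> R) xi,
     zn @ \oo --> z -> (forall n, G (zn n) (xin n)) -> dweak_cvg xin xi ->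
     G z xi) ->
  0 <= cG -> 0 <= dG ->
  (forall z xi, G z xi -> dnorm xi <= cG * `|z| `^ (p - 1) + dG) ->
  (* (H E) *)
  dual E ->
  (* (H gamma) *)
  (forall (a : R) x y, gamma (a *: x + y) = a *: gamma x + gamma y) ->
  (exists C : R, forall x, `|gamma x| <= C * `|x|) ->
  (forall r : R, compact (closure (gamma @` [set x | D x /\ Wnorm L x <= r]))) ->
  (* (H Psi) *)
  (forall x, lsc (Psi x)) ->
  (forall x y1 y2 (t : R), 0 <= t -> t <= 1 ->
     Psi x (t *: y1 + (1 - t) *: y2) <= t * Psi x y1 + (1 - t) * Psi x y2) ->
  0 < eta -> eta < p ->
  (forall x y1 y2, 0 <= bPsi x y1 y2) ->
  (forall r : R, exists C : R, forall x y1 y2,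
     `|x| <= r -> `|y1| <= r -> `|y2| <= r -> bPsi x y1 y2 <= C) ->
  (forall x y1 y2, Psi x y1 - Psi x y2 <= bPsi x y1 y2 * `|y1 - y2| `^ eta) ->
  (forall r : R, forall eps : R, 0 < eps -> exists rho : R, forall z x,
     `|z| <= r -> rho <= `|x| -> bPsi z 0 x <= eps * `|x| `^ (p - eta)) ->
  (forall (wn yn xn : nat -> X) w y x,
     (forall n, K (wn n) /\ D (wn n)) -> (forall n, K (yn n) /\ D (yn n)) ->
     (forall n, K (xn n) /\ D (xn n)) ->
     Wweak_cvg D L wn w -> Wweak_cvg D L xn x -> yn @ \oo --> y ->
     forall eps : R, 0 < eps ->
       \forall n \near \oo,
         Psi (wn n) (yn n) - Psi (wn n) (xn n) <= Psi w y - Psi w x + eps) ->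
  (forall v, exists f, dual f /\ forall y, Psi v y - Psi v 0 >= f y) ->
  (forall v, `|Psi v 0| <= ePsi) ->
  0 <= cPsi -> 0 <= dPsi -> 1 <= beta -> beta < p ->
  (forall v y, Psi v y >= - cPsi * `|y| `^ beta - dPsi) ->
  (* smallness and strict monotonicity *)
  cF > cG * opnorm gamma `^ p ->
  (forall x y, x <> y -> 0 < F x (x - y) - F y (x - y)) ->
  (* conclusion: the solution map S is bounded from K x Y^* into W *)
  forall r : R, exists C : R, forall z xi x,
    K z -> dual xi -> `|z| + dnorm xi <= r ->
    problem2 D L F E gamma M Psi z xi x ->
    Wnorm L x <= C.
Proof.
move=> _ _ _ _ p1 HD0 HDlin HLlin HLdual HDdense HLmon _ _ _ _ HM HMint _
  HFdual HFbd HFmon _ cF0 dF0 HFcoer _ _ _ _ _ HE _ [Cg HCg] _ _ _ eta0 _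
  bPsi0 HbPsibd HPsilip _ _ _ HePsi cPsi0 dPsi0 beta1 betap HPsilow _ _ r.
have HL0 : forall v, L 0 v = 0.
  move=> v; have := HLlin (-1) 0 0 HD0 HD0.
  rewrite scaler0 addr0 => /(congr1 (fun g => g v)) ->.
  by rewrite mulN1r addNr.
have [δ δ0 Hδ] : exists2 δ : R, 0 < δ & forall y, `|y| < δ -> forall w, K w -> M w y.
  have := nbhs_norm0P.1 HMint; move=> [e /= e0 He].
  by exists e => // y hy w Kw; apply: He.
set Cg' := `|Cg|.
have HCg' : forall v, `|gamma v| <= Cg' * `|v|.
  move=> v; apply: le_trans (HCg v) _; apply: ler_wpM2r => //; exact: ler_norm.
have Cg'0 : 0 <= Cg' by rewrite /Cg' normr_ge0.
set rr := Num.max r 0.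
have rr0 : 0 <= rr by rewrite /rr le_max lexx orbT.
have rrr : r <= rr by rewrite /rr le_max lexx.
set nE := dnorm E.
have nE0 : 0 <= nE by apply: dnorm_ge0.
set T := Num.max 1 ((((nE + rr * Cg') + cPsi + (ePsi + dPsi + dF)) / cF) `^ ((p - beta)^-1)).
have T1 : 1 <= T by rewrite /T le_max lexx.
have [CF HCF] := HFbd T.
have [Cb HCb] := HbPsibd (Num.max rr δ).
set B := (CF + nE + rr * Cg') * (δ + T) + cPsi * T `^ beta + dPsi + ePsi + Cb * δ `^ eta.
exists (T + 2 / δ * B) => z xi x Kz dxi hr [Mx [Dx Hx]].
have nxi0 : 0 <= dnorm xi by apply: dnorm_ge0.
have zr : `|z| <= rr by apply: le_trans rrr; apply: le_trans hr; rewrite lerDl.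
have xir : dnorm xi <= rr by apply: le_trans rrr; apply: le_trans hr; rewrite lerDr.
have dLx := HLdual x Dx.
have Lxx : 0 <= L x x.
  by have := HLmon x 0 Dx HD0; rewrite subr0 HL0 subr0.
have xiB : forall v, `|xi (gamma v)| <= rr * Cg' * `|v|.
  move=> v; apply: le_trans (dnorm_ub _ dxi) _.
  rewrite -mulrA; apply: ler_pM => //; exact: HCg'.
have EB : forall v, `|E v| <= nE * `|v| by move=> v; apply: dnorm_ub.
have P0 : Psi z 0 <= ePsi by apply: le_trans (HePsi z); exact: ler_norm.
have xT : `|x| <= T.
  have h0 : `|0 : X| < δ by rewrite normr0.
  have := Hx 0 (Hδ 0 h0 z Kz) HD0.
  rewrite !sub0r (dualN _ dLx) (dualN _ (HFdual x)) (dualN _ HE) => H.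
  have ha := le_trans (ler_norm _) (xiB (- x)); rewrite normrN in ha.
  have hE := le_trans (ler_norm _) (EB x).
  have hF := HFcoer x.
  have hPx := HPsilow z x.
  apply: growth_bound => //;
  try (by rewrite addr_ge0 // mulr_ge0);
  try (by rewrite !addr_ge0 // (le_trans _ (HePsi z)));
  rewrite !mulrDl; rewrite mulNr in hPx; lra.
have FB : dnorm (F x) <= CF by apply: HCF.
have nF0 : 0 <= dnorm (F x) by apply: dnorm_ge0.
have xb : `|x| `^ beta <= T `^ beta.
  by apply: ge0_ler_powR; rewrite ?nnegrE //; lra.
have LB : forall y, D y -> `|y| < δ -> - B <= L x y.
  move=> y Dy yd.
  have H := Hx y (Hδ y yd z Kz) Dy.
  rewrite (dualB _ _ dLx) in H.
  have yx : `|y - x| <= δ + T by apply: le_trans (ler_normB _ _) _; lra.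
  have hF : `|F x (y - x)| <= CF * (δ + T).
    apply: le_trans (dnorm_ub _ (HFdual x)) _; exact: ler_pM.
  have hE : `|E (y - x)| <= nE * (δ + T).
    apply: le_trans (EB _) _; exact: ler_wpM2l.
  have ha : `|xi (gamma (y - x))| <= rr * Cg' * (δ + T).
    apply: le_trans (xiB _) _; apply: ler_wpM2l => //; exact: mulr_ge0.
  have hPx := HPsilow z x.
  have cPb : cPsi * `|x| `^ beta <= cPsi * T `^ beta by apply: ler_wpM2l.
  have hPy : Psi z y <= ePsi + Cb * δ `^ eta.
    have := HPsilip z y 0; rewrite subr0 => h.
    have hb : bPsi z y 0 <= Cb.
      have m0 : 0 <= Num.max rr δ by rewrite le_max rr0.
      have mz : `|z| <= Num.max rr δ by rewrite le_max zr.
      have my : `|y| <= Num.max rr δ by rewrite le_max (ltW yd) orbT.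
      by apply: HCb; rewrite ?normr0.
    have hy : `|y| `^ eta <= δ `^ eta.
      by apply: ge0_ler_powR; rewrite ?nnegrE //; try lra; exact: ltW.
    have : bPsi z y 0 * `|y| `^ eta <= Cb * δ `^ eta.
      by apply: ler_pM; rewrite ?powR_ge0.
    lra.
  have h1 := lerNnormlW hF; have h1' := le_trans (ler_norm _) hF.
  have h2 := lerNnormlW hE; have h2' := le_trans (ler_norm _) hE.
  have h3 := lerNnormlW ha; have h3' := le_trans (ler_norm _) ha.
  rewrite /B; rewrite mulNr in hPx.
  rewrite !mulrDl; lra.
have LC : forall y, D y -> `|y| < δ -> `|L x y| <= B.
  move=> y Dy yd; rewrite ler_norml; apply/andP; split; first exact: LB.
  have Dy' : D (- y) by have := HDlin (-1) y 0 Dy HD0; rewrite addr0 scaleN1r.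
  have yd' : `|- y| < δ by rewrite normrN.
  have := LB (- y) Dy' yd'; rewrite (dualN _ dLx); lra.
set N := dnorm (L x).
have N0 : 0 <= N by apply: dnorm_ge0.
have LD : forall w, `|w| <= δ / 2 -> `|L x w| <= B.
  move=> w wd; apply/ler_addgt0Pr => e e0.
  set ε := Num.min (δ / 2) (e / (N + 1)).
  have ε0 : 0 < ε by rewrite /ε lt_min divr_gt0 //= divr_gt0 //; lra.
  have εδ : ε <= δ / 2 by rewrite /ε ge_min lexx.
  have εe : ε <= e / (N + 1) by rewrite /ε ge_min lexx orbT.
  have : closure D w by rewrite HDdense.
  move=> /(_ (ball w ε) (nbhsx_ballx w ε ε0)) [y [Dy bw]].
  rewrite -ball_normE /= in bw.
  have yd : `|y| < δ.
    have -> : y = w - (w - y) by rewrite opprB addrC subrK.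
    apply: le_lt_trans (ler_normB _ _) _; lra.
  have ew : w = y + (w - y) by rewrite addrC subrK.
  rewrite ew (dualD _ _ dLx).
  apply: le_trans (ler_normD _ _) _; apply: lerD; first exact: LC.
  apply: le_trans (dnorm_ub _ dLx) _.
  have h1 : N * `|w - y| <= N * ε by apply: ler_wpM2l => //; exact: ltW.
  have h2 : (N + 1) * ε <= e.
    by rewrite -ler_pdivlMl; [rewrite mulrC | lra].
  rewrite mulrDl mul1r in h2; rewrite -/N; lra.
have LE : N <= 2 / δ * B.
  apply: dnorm_le => v v1.
  have wd : `|(δ / 2) *: v| <= δ / 2.
    rewrite normrZ ger0_norm; last by rewrite divr_ge0 //; lra.
    by rewrite -[X in _ <= X]mulr1 ler_wpM2l // divr_ge0 //; lra.
  have := LD _ wd; rewrite (dualZ _ _ dLx) normrM ger0_norm; last by rewrite divr_ge0 //; lra.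
  rewrite -ler_pdivlMl; last by rewrite divr_gt0.
  by rewrite invf_div.
rewrite /Wnorm -/N; lra.
Qed.
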